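(* Let $w=(w_k)_{k\ge0}$ be a weight sequence with $w_0>0$ and $\omega<\infty$. Suppose that $n\to\infty$ and $m=m(n)$ with $m/n\to\lambda>0$. Then $Y_{(j)}=\omega$ with probability tending to $1$, for every fixed $j$.
   Context: A weight sequence is a sequence $w=(w_k)_{k\ge0}$ of nonnegative reals; $\omega=\sup\{k:w_k>0\}$. Balls-in-boxes: $\mathcal B_{m,n}=\{(y_1,\dots,y_n)\in\{0,1,\dots\}^n:\sum y_i=m\}$, weight $w(y)=\prod_iw_{y_i}$, $Z(m,n)=\sum_{y\in\mathcal B_{m,n}}w(y)$; when $Z(m,n)>0$, $B_{m,n}=(Y_1,\dots,Y_n)$ is random with $P(B_{m,n}=y)=w(y)/Z(m,n)$ (only $m,n$ with $Z(m,n)>0$ are considered). $Y_{(1)}\ge Y_{(2)}\ge\dots\ge Y_{(n)}$ denote $Y_1,\dots,Y_n$ arranged in decreasing order. *)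

(* Defs.v *)
From HB Require Import structures.
From mathcomp Require Import all_boot all_order all_algebra.
From mathcomp Require Import all_classical all_reals all_analysis.
Set Implicit Arguments. Unset Strict Implicit. Unset Printing Implicit Defensive.
Import Order.TTheory GRing.Theory Num.Theory.
Local Open Scope ring_scope.

(* Configurations y = (y_1,...,y_n) with y_i in {0,...,m}; B_{m,n} is the
   subset of those with sum m (any y with sum m has all y_i <= m). *)
Definition config (m n : nat) := {ffun 'I_n -> 'I_m.+1}.

Definition in_Bmn (m n : nat) (y : config m n) : bool :=
  (\sum_(i < n) nat_of_ord (y i))%N == m.

Definition bweight (R : realType) (w : nat -> R) (m n : nat) (y : config m n) : R :=
  \prod_(i < n) w (nat_of_ord (y i)).

Definition Zpart (R : realType) (w : nat -> R) (m n : nat) : R :=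
  \sum_(y : config m n | in_Bmn y) bweight w y.

Definition order_stat (m n : nat) (y : config m n) (j : nat) : nat :=
  nth 0%N (sort geq [seq nat_of_ord (y i) | i <- enum 'I_n]) j.-1.

Definition bprob (R : realType) (w : nat -> R) (m n : nat) (A : config m n -> bool) : R :=
  (\sum_(y : config m n | in_Bmn y && A y) bweight w y) / Zpart w m n.

(* Main.v *)
Require Import Defs.
From HB Require Import structures.
From mathcomp Require Import all_boot all_order all_algebra.
From mathcomp Require Import all_classical all_reals all_analysis.
From mathcomp Require Import zify ring lra.
Import Order.TTheory GRing.Theory Num.Theory.
Import numFieldNormedType.Exports.

Module Helpers.
Definition cnt {m n} (x : config m n) (v : nat) : nat := #|[set i | nat_of_ord (x i) == v]|.

Lemma cnt_count m n (x : config m n) v :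
  cnt x v = count (pred1 v) [seq nat_of_ord (x i) | i <- enum 'I_n].
Proof.
rewrite /cnt count_map -size_filter cardE /enum_mem; congr size.
rewrite -enumT filter_predT; apply: eq_filter => i; by rewrite !inE.
Qed.

Lemma os_cnt m n (x : config m n) j v : (0 < j)%N -> (forall i, x i <= v)%N ->
  order_stat x j != v -> (cnt x v < j)%N.
Proof.
move=> j0 xv ne.
rewrite cnt_count -(count_sort geq).
set s := sort _ _.
have ss : sorted geq s by apply: sort_sorted => a b; exact: leq_total.
have sv : forall i, (i < size s)%N -> (nth 0%N s i <= v)%N.
  move=> i hi; have : nth 0%N s i \in s by apply: mem_nth.
  rewrite mem_sort => /mapP [k _ ->]; exact: xv.
rewrite -(cat_take_drop j.-1 s) count_cat.
have -> : count (pred1 v) (drop j.-1 s) = 0%N.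
  apply/eqP; rewrite -leqn0 leqNgt -has_count; apply/negP => /(has_nthP 0%N) [i].
  rewrite size_drop nth_drop /= => hi /eqP ei.
  have hj : (j.-1 < size s)%N by lia.
  have := sorted_leq_nth (fun a b c (h1 : (a <= b)%N) h2 => leq_trans h2 h1) leqnn 0%N ss.
  move=> /(_ j.-1 (j.-1 + i)%N); rewrite !inE => /(_ hj).
  have -> : (j.-1 + i < size s)%N by lia.
  move=> /(_ isT (leq_addr _ _)); rewrite ei => h.
  move: ne; rewrite /order_stat -/s => /negP; apply; rewrite eqn_leq h andbT.
  exact: sv.
rewrite addn0; apply: leq_ltn_trans (count_size _ _) _.
rewrite size_take; case: ifP => h; lia.
Qed.

Lemma cntE m n (x : config m n) v : cnt x v = (\sum_(i < n) (nat_of_ord (x i) == v : nat))%N.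
Proof.
rewrite /cnt -sum1_card big_mkcond /=; apply: eq_bigr => i _; rewrite inE; by case: eqP.
Qed.

Lemma pigeon m n (x : config m n) o j K : (forall i, x i <= o.+1)%N -> in_Bmn x ->
  (cnt x o.+1 < j)%N -> (o.+1 * j + o.+1 * o.+1 * K <= m)%N ->
  exists a : nat, [/\ (0 < a)%N, (a < o.+1)%N & (K <= cnt x a)%N].
Proof.
move=> xv /eqP hm hc hK.
case: (boolP [exists a : 'I_o.+1, (0 < a)%N && (K <= cnt x a)%N]).
  by case/existsP => a /andP [h1 h2]; exists a.
rewrite negb_exists => /forallP hn.
have h1 : (m <= o.+1 * cnt x o.+1 + o * \sum_(a < o.+1 | (0 < a)%N) cnt x a)%N.
  suff : (\sum_(i < n) nat_of_ord (x i) <= o.+1 * cnt x o.+1 + o * \sum_(a < o.+1 | (0 < a)%N) cnt x a)%N by rewrite hm.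
  rewrite cntE (eq_bigr (fun a : 'I_o.+1 => \sum_(i<n) (nat_of_ord (x i) == nat_of_ord a : nat))%N); last by move=> a _; rewrite cntE.
  rewrite exchange_big /= big_distrr /= big_distrr /= -big_split /=.
  apply: leq_sum => i _.
  have := xv i; case: (ltngtP (x i) o.+1) => // hlt _.
    case: (posnP (x i)) => [->//|hp].
    rewrite (bigD1 (Ordinal hlt)) //= eqxx mulnDr; lia.
  by rewrite muln1 hlt leq_addr.
have h2 : (\sum_(a < o.+1 | (0 < a)%N) cnt x a <= o.+1 * K.-1)%N.
  apply: leq_trans (_ : \sum_(a < o.+1) K.-1 <= _)%N.
    rewrite [X in (_ <= X)%N](bigID (fun a : 'I_o.+1 => (0 < a)%N)) /=.
    apply: leq_trans (leq_addr _ _); apply: leq_sum => a ha.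
    have := hn a; rewrite ha /= -ltnNge; lia.
  by rewrite sum_nat_const card_ord.
have h3 : (o * \sum_(a < o.+1 | (0 < a)%N) cnt x a <= o * (o.+1 * K.-1))%N by apply: leq_mul.
have h4 : (o.+1 * cnt x o.+1 <= o.+1 * j.-1)%N by apply: leq_mul => //; lia.
nia.
Qed.

Section Switch.
Variables (m n o : nat).
Local Notation cfg := (config m n).
Local Notation fn := {ffun 'I_o.+1 -> 'I_n}.

Definition sw (x : cfg) (a : 'I_o.+1) (g : fn) : cfg :=
  [ffun i => if [pick k | g k == i] is Some k then (if (k < a)%N then inord o.+1 else ord0) else x i].
Definition unsw (y : cfg) (a : 'I_o.+1) (g : fn) : cfg :=
  [ffun i => if [pick k | g k == i] is Some _ then inord a else y i].
Definition good (x : cfg) (a : 'I_o.+1) (g : fn) : bool :=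
  [&& (0 < a)%N, injectiveb g & [forall k, nat_of_ord (x (g k)) == nat_of_ord a]].

Lemma pick_in (g : fn) k : injective g -> [pick k' | g k' == g k] = Some k.
Proof.
move=> ig; case: pickP => [k' /eqP /ig -> //|/(_ k)]; by rewrite eqxx.
Qed.

Lemma pick_out (g : fn) i : i \notin (g @: [set: 'I_o.+1]) -> [pick k' | g k' == i] = None.
Proof.
move=> hi; case: pickP => // k' /eqP e; case/negP: hi; rewrite -e; apply: imset_f; by rewrite inE.
Qed.

Lemma sw_in x a (g : fn) k : injective g -> sw x a g (g k) = if (k < a)%N then inord o.+1 else ord0.
Proof. by move=> ig; rewrite ffunE pick_in. Qed.

Lemma sw_out x a (g : fn) i : i \notin (g @: [set: 'I_o.+1]) -> sw x a g i = x i.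
Proof. by move=> hi; rewrite ffunE pick_out. Qed.

Hypothesis om : (o.+1 <= m)%N.

Lemma unsw_sw x a g : good x a g -> unsw (sw x a g) a g = x.
Proof.
case/and3P => _ _ /forallP hx; apply/ffunP => i; rewrite !ffunE.
case: pickP => [k /eqP <-|//]; apply: val_inj => /=.
rewrite inordK; first by apply/esym/eqP; exact: hx.
by apply: leq_trans (ltn_ord a) _; lia.
Qed.

Lemma sum_lt (N a c : nat) : (\sum_(k < N) (if (k < a)%N then c else 0) = minn a N * c)%N.
Proof.
elim: N => [|N IH]; first by rewrite big_ord0 minn0.
rewrite big_ord_recr /= IH.
case: (boolP (N < a)%N) => h; rewrite ?h ?(negbTE h).
  have -> : minn a N = N by lia.
  have -> : minn a N.+1 = N.+1 by lia.
  by rewrite mulSn addnC.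
have -> : minn a N = a by lia.
have -> : minn a N.+1 = a by lia.
by rewrite addn0.
Qed.

Lemma sum_img (F : 'I_n -> nat) (g : fn) : injective g ->
  (\sum_(i < n) F i = \sum_(k < o.+1) F (g k) + \sum_(i in ~: (g @: [set: 'I_o.+1])) F i)%N.
Proof.
move=> ig; rewrite (bigID (mem (g @: [set: 'I_o.+1]))) /=; congr (_ + _).
  rewrite big_imset /=; last by move=> ? ? _ _; exact: ig.
  by apply: eq_bigl => k; rewrite inE.
by apply: eq_bigl => i; rewrite inE.
Qed.

Lemma sw_B x a g : good x a g -> in_Bmn x -> in_Bmn (sw x a g).
Proof.
move=> gd; have /and3P [_ /injectiveP ig /forallP hx] := gd.
rewrite /in_Bmn (sum_img _ _ ig) [X in _ -> (X == _)](sum_img _ _ ig).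
have -> : (\sum_(i in ~: (g @: [set: 'I_o.+1])) nat_of_ord (sw x a g i) = \sum_(i in ~: (g @: [set: 'I_o.+1])) nat_of_ord (x i))%N.
  by apply: eq_bigr => i; rewrite inE => hi; rewrite sw_out.
have -> : (\sum_(k < o.+1) nat_of_ord (sw x a g (g k)) = a * o.+1)%N.
  have -> : (a * o.+1 = minn a o.+1 * o.+1)%N by rewrite (minn_idPl (ltnW (ltn_ord a))).
  rewrite -(sum_lt o.+1 a o.+1) ; apply: eq_bigr => k _; rewrite sw_in //.
  case: ifP => _ //=; rewrite inordK //.
have -> : (\sum_(k < o.+1) nat_of_ord (x (g k)) = a * o.+1)%N.
  rewrite (eq_bigr (fun _ => nat_of_ord a)); last by move=> k _; apply/eqP.
  by rewrite sum_nat_const card_ord mulnC.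
by [].
Qed.
End Switch.
Arguments sw {m n o}. Arguments unsw {m n o}. Arguments good {m n o}.

Lemma ffact_ge N p : ((N - p) ^ p <= N ^_ p)%N.
Proof.
rewrite ffact_prod -{2}(card_ord p) -prod_nat_const.
apply: leq_prod => i _; apply: leq_sub2l; exact: ltnW.
Qed.

Section Count.
Variables (m n o : nat).
Local Notation cfg := (config m n).
Local Notation fn := {ffun 'I_o.+1 -> 'I_n}.

Lemma good_lb (x : cfg) (a0 K : nat) : (0 < a0)%N -> (a0 < o.+1)%N -> (K <= cnt x a0)%N ->
  ((K - o.+1) ^ o.+1 <= #|[set p : 'I_o.+1 * fn | good x p.1 p.2]|)%N.
Proof.
move=> h0 h1 hK.
pose a' := Ordinal h1.
pose P := [pred i : 'I_n | nat_of_ord (x i) == a0].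
pose S := [set f in ffun_on P | injectiveb (aT := 'I_o.+1) f].
have cS : #|S| = (#|P| ^_ o.+1)%N by rewrite /S card_inj_ffuns_on card_ord.
have cP : #|P| = cnt x a0 by rewrite /cnt cardsE.
apply: leq_trans (_ : (#|P| - o.+1) ^ o.+1 <= _)%N.
  by rewrite leq_exp2r // leq_sub2r // cP.
apply: leq_trans (ffact_ge _ _) _; rewrite -cS.
have pinj : injective (fun f : fn => (a', f)) by move=> ? ? [].
rewrite -(card_imset S pinj).
apply: subset_leq_card; apply/fintype.subsetP => p /imsetP [f].
rewrite /S inE => /andP [/ffun_onP fP fi] ->; rewrite inE /good /= h0 fi /=.
apply/forallP => k; exact: (fP k).
Qed.
End Count.

Section Fiber.
Variables (m n o : nat).
Local Notation cfg := (config m n).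
Local Notation fn := {ffun 'I_o.+1 -> 'I_n}.
Hypothesis om : (o.+1 <= m)%N.

Definition Om (y : cfg) : {set 'I_n} := [set i | nat_of_ord (y i) == o.+1].

Lemma Q2_card (Om0 : {set 'I_n}) : (#|[set g : fn | g ord0 \in Om0]| <= #|Om0| * n ^ o)%N.
Proof.
pose phi := fun g : fn => (g ord0, [ffun i : 'I_o => g (lift ord0 i)]).
have phinj : injective phi.
  move=> g1 g2 [e0 /ffunP e]; apply/ffunP => i.
  case: (unliftP ord0 i) => [j ->|->] //.
  by have := e j; rewrite !ffunE.
rewrite -(card_imset _ phinj).
apply: leq_trans (_ : #|finset.setX Om0 [set: {ffun 'I_o -> 'I_n}]| <= _)%N.
  apply: subset_leq_card; apply/fintype.subsetP => p /imsetP [g]; rewrite inE => hg ->.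
  by rewrite inE /= hg inE.
by rewrite cardsX cardsT card_ffun !card_ord.
Qed.

Lemma fiber_ub (y : cfg) (E : {set cfg * ('I_o.+1 * fn)}) L :
  (forall t, t \in E -> good t.1 t.2.1 t.2.2 /\ sw t.1 t.2.1 t.2.2 = y) ->
  (#|Om y| <= L)%N -> (#|E| <= o.+1 * (L * n ^ o))%N.
Proof.
move=> hE hL.
have inj : {in E &, injective snd}.
  move=> t1 t2 h1 h2 e.
  have [g1 s1] := hE _ h1; have [g2 s2] := hE _ h2.
  have e1 := @unsw_sw _ _ _ om _ _ _ g1; have e2 := @unsw_sw _ _ _ om _ _ _ g2.
  move: t1 t2 e h1 h2 g1 g2 s1 s2 e1 e2 => [x1 p1] [x2 p2] /= <- _ _ _ _ <- <- -> e2.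
  by rewrite e2.
rewrite -(card_in_imset inj).
apply: leq_trans (_ : #|finset.setX [set: 'I_o.+1] [set g : fn | g ord0 \in Om y]| <= _)%N.
  apply: subset_leq_card; apply/fintype.subsetP => p /imsetP [t ht ->].
  have [gd <-] := hE _ ht; have /and3P [a0 /injectiveP ig _] := gd.
  by rewrite !inE /= sw_in // a0 inordK.
have -> := cardsX [set: 'I_o.+1] [set g : fn | g ord0 \in Om y].
rewrite cardsT card_ord leq_mul2l; apply/orP; right.
apply: leq_trans (Q2_card _) _; by rewrite leq_mul2r hL orbT.
Qed.
End Fiber.
Arguments Om {m n} o.

Section Weights.
Variables (R : realType) (w : nat -> R) (o : nat).
Local Open Scope ring_scope.
Hypotheses (w_ge0 : forall k, 0 <= w k) (w0_gt0 : 0 < w 0%N)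
  (womega_gt0 : 0 < w o.+1) (w_gt_omega : forall k, (o.+1 < k)%N -> w k = 0).
Local Open Scope ring_scope.

Definition Mw := \sum_(k < o.+2) w k.
Definition muw := Num.min (w 0%N) (w o.+1).
Definition Cw := (Mw / muw) ^+ o.+1.

Lemma w_le_M k : w k <= Mw.
Proof.
case: (ltnP o.+1 k) => h; first by rewrite w_gt_omega // sumr_ge0.
rewrite /Mw (bigD1 (Ordinal (h : (k < o.+2)%N))) //= lerDl sumr_ge0 //.
Qed.

Lemma mu_gt0 : 0 < muw.
Proof. by rewrite /muw lt_min w0_gt0 womega_gt0. Qed.

Lemma Cw_ge0 : 0 <= Cw.
Proof.
rewrite /Cw exprn_ge0 // divr_ge0 //; last exact: ltW mu_gt0.
by rewrite /Mw sumr_ge0.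
Qed.

Variables (m n : nat).
Local Notation cfg := (config m n).
Local Notation fn := {ffun 'I_o.+1 -> 'I_n}.
Hypothesis om : (o.+1 <= m)%N.

Lemma prod_img (F : 'I_n -> R) (g : fn) : injective g ->
  \prod_(i < n) F i = \prod_(k < o.+1) F (g k) * \prod_(i in ~: (g @: [set: 'I_o.+1])) F i.
Proof.
move=> ig; rewrite (bigID (mem (g @: [set: 'I_o.+1]))) /=; congr (_ * _).
  rewrite big_imset /=; last by move=> ? ? _ _; exact: ig.
  by apply: eq_bigl => k; rewrite inE.
by apply: eq_bigl => i; rewrite inE.
Qed.

Lemma W_sw (x : cfg) (a : 'I_o.+1) (g : fn) : good x a g -> bweight w x <= Cw * bweight w (sw x a g).
Proof.
case/and3P => _ /injectiveP ig _.
rewrite /bweight (prod_img _ _ ig) [X in _ <= _ * X](prod_img _ _ ig).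
have -> : \prod_(i in ~: (g @: [set: 'I_o.+1])) w (sw x a g i) = \prod_(i in ~: (g @: [set: 'I_o.+1])) w (x i).
  by apply: eq_bigr => i; rewrite inE => hi; rewrite sw_out.
set Q := \prod_(i in ~: _) _.
have Q0 : 0 <= Q by apply: prodr_ge0.
have h1 : \prod_(k < o.+1) w (x (g k)) <= Mw ^+ o.+1.
  have -> : Mw ^+ o.+1 = \prod_(k < o.+1) Mw by rewrite prodr_const card_ord.
  by apply: ler_prod => k _; rewrite w_ge0 w_le_M.
have h2 : muw ^+ o.+1 <= \prod_(k < o.+1) w (sw x a g (g k)).
  have -> : muw ^+ o.+1 = \prod_(k < o.+1) muw by rewrite prodr_const card_ord.
  apply: ler_prod => k _; rewrite (ltW mu_gt0) /= sw_in //.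
  case: ifP => _; rewrite /muw ?ge_min ?lexx ?orbT //=.
  by rewrite inordK // lexx orbT.
have mu0 := mu_gt0.
apply: le_trans (_ : Mw ^+ o.+1 * Q <= _); first by rewrite ler_wpM2r.
rewrite mulrA; apply: le_trans (_ : Cw * muw ^+ o.+1 * Q <= _); last first.
  by rewrite ler_wpM2r // ler_wpM2l // Cw_ge0.
rewrite /Cw -exprMn divfK //; exact: lt0r_neq0.
Qed.

Lemma W0 (x : cfg) i : w (x i) = 0 -> bweight w x = 0.
Proof. by move=> h; rewrite /bweight (bigD1 i) //= h mul0r. Qed.

Lemma Wpos_le (x : cfg) : bweight w x != 0 -> forall i, (x i <= o.+1)%N.
Proof.
move=> h i; rewrite leqNgt; apply/negP => hi; case/eqP: h; apply: (W0 x i); exact: w_gt_omega.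
Qed.

Lemma Om_sw (x : cfg) (a : 'I_o.+1) (g : fn) : good x a g ->
  (#|Om o (sw x a g)| <= cnt x o.+1 + o.+1)%N.
Proof.
case/and3P => _ /injectiveP ig _.
apply: leq_trans (_ : #|Om o x :|: g @: [set: 'I_o.+1]| <= _)%N.
  apply: subset_leq_card; apply/fintype.subsetP => i; rewrite !inE.
  case: (boolP (i \in g @: [set: 'I_o.+1])) => hi; first by rewrite orbT.
  by rewrite sw_out // orbF.
apply: leq_trans (leq_card_setU _ _) _; rewrite leq_add //.
by apply: leq_trans (leq_imset_card _ _) _; rewrite cardsT card_ord.
Qed.

Lemma W_ge0 (x : cfg) : 0 <= bweight w x.
Proof. by apply: prodr_ge0 => i _. Qed.

Lemma main_bound j K : (0 < j)%N -> (o.+1 * j + o.+1 * o.+1 * K <= m)%N ->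
  (\sum_(x : cfg | in_Bmn x && (order_stat x j != o.+1)) bweight w x) * ((K - o.+1) ^ o.+1)%:R
  <= Cw * (o.+1 * ((j + o) * n ^ o))%:R * Zpart w m n.
Proof.
move=> j0 hK.
pose A (x : cfg) := [&& in_Bmn x, order_stat x j != o.+1 & bweight w x != 0].
have -> : \sum_(x : cfg | in_Bmn x && (order_stat x j != o.+1)) bweight w x = \sum_(x | A x) bweight w x.
  rewrite [LHS](bigID (fun x => bweight w x != 0)) /= [X in _ + X]big1 ?addr0; last first.
    by move=> x /andP [_ /negPn /eqP].
  by apply: eq_bigl => x; rewrite /A andbA.
pose G (x : cfg) := [set p : 'I_o.+1 * fn | good x p.1 p.2].
have step1 : (\sum_(x | A x) bweight w x) * ((K - o.+1) ^ o.+1)%:R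
    <= \sum_(x | A x) \sum_(p | p \in G x) bweight w x.
  rewrite mulr_suml; apply: ler_sum => x /and3P [hB hos hW].
  rewrite sumr_const -[_ *+ #|G x|]mulr_natr ler_wpM2l ?W_ge0 // ler_nat.
  have xv := Wpos_le x hW.
  have hc := @os_cnt _ _ x j o.+1 j0 xv hos.
  have [a0 [a1 a2 a3]] := @pigeon _ _ x o j K xv hB hc hK.
  exact: (@good_lb _ _ o x a0 K a1 a2 a3).
apply: (le_trans step1); rewrite pair_big_dep /=.
apply: le_trans (_ : \sum_(t | A t.1 && (t.2 \in G t.1)) Cw * bweight w (sw t.1 t.2.1 t.2.2) <= _).
  apply: ler_sum => t /andP [_]; rewrite inE => gd; exact: W_sw.
rewrite -mulr_sumr -mulrA ler_wpM2l ?Cw_ge0 //.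
rewrite (partition_big (fun t => sw t.1 t.2.1 t.2.2) (fun y => in_Bmn y)) /=; last first.
  move=> t /andP [/and3P [hB _ _]]; rewrite inE => gd; exact: sw_B.
rewrite /Zpart mulr_sumr; apply: ler_sum => y hy.
rewrite (eq_bigr (fun _ => bweight w y)); last by move=> t /andP [_ /eqP ->].
rewrite sumr_const -[_ *+ #|_|]mulr_natr mulrC ler_wpM2r ?W_ge0 // ler_nat.
set E := [set t : cfg * ('I_o.+1 * fn) | A t.1 && (t.2 \in G t.1) && (sw t.1 t.2.1 t.2.2 == y)].
apply: leq_trans (_ : #|E| <= _)%N.
  by apply: eq_leq; apply: eq_card => t; rewrite inE.
have hE : forall t, t \in E -> good t.1 t.2.1 t.2.2 /\ sw t.1 t.2.1 t.2.2 = y.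
  by move=> t; rewrite !inE => /andP [/andP [_ gd] /eqP]; split.
case: (set_0Vmem E) => [->|[t ht]]; first by rewrite cards0.
apply: (@fiber_ub m n o om y E (j + o) hE).
have [gd <-] := hE _ ht.
apply: leq_trans (Om_sw _ _ _ gd) _.
move: ht; rewrite !inE => /andP [/andP [/and3P [_ hos hW] _] _].
have xv := Wpos_le _ hW.
have := @os_cnt _ _ _ j o.+1 j0 xv hos.
by rewrite addnS ltn_add2r.
Qed.
End Weights.


Section BPart.
Local Open Scope ring_scope.
Lemma natQ_facts (n Q : nat) : (0 < Q)%N -> (2 * Q <= n)%N -> (n <= 2 * Q * (n %/ Q))%N /\ (0 < n %/ Q)%N.
Proof.
move=> Q0 h.
have e := divn_eq n Q; have r := ltn_pmod n Q0.
split; nia.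
Qed.

Section Key.
Variables (R : realType) (w : nat -> R) (o : nat).
Hypotheses (w_ge0 : forall k, 0 <= w k) (w0_gt0 : 0 < w 0%N)
  (womega_gt0 : 0 < w o.+1) (w_gt_omega : forall k, (o.+1 < k)%N -> w k = 0).

Lemma bprob_compl m n (P : config m n -> bool) : 0 < Zpart w m n ->
  bprob w P = 1 - bprob w (fun y => ~~ P y).
Proof.
move=> Z0; apply/eqP; rewrite eq_sym subr_eq /bprob -mulrDl.
have -> : \sum_(y | in_Bmn y && P y) bweight w y + \sum_(y | in_Bmn y && ~~ P y) bweight w y = Zpart w m n.
  by rewrite /Zpart [RHS](bigID P) /=.
by rewrite divff // lt0r_neq0.
Qed.

Lemma key_bound m n j q : (0 < j)%N -> (0 < q)%N -> 0 < Zpart w m n -> (n <= q * m)%N ->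
  (2 * (2 * o.+1 * o.+1 * q) + 2 * q * (o.+1 * j + o.+1 * o.+1 * o.+1) <= n)%N ->
  bprob w (fun y : config m n => order_stat y j != o.+1)
    <= @Cw R w o * (o.+1 * (j + o) * (2 * (2 * o.+1 * o.+1 * q)) ^ o.+1)%:R / n%:R.
Proof.
move=> j0 q0 Z0 hnm hn.
set Q := (2 * o.+1 * o.+1 * q)%N.
have Q0 : (0 < Q)%N by rewrite /Q; nia.
have [hnQ hQ1] : (n <= 2 * Q * (n %/ Q))%N /\ (0 < n %/ Q)%N by apply: natQ_facts => //; lia.
have hdiv := leq_trunc_div n Q.
have h1 : (2 * o.+1 * o.+1 * (n %/ Q) <= m)%N.
  rewrite -(leq_pmul2l q0); apply: leq_trans hnm; apply: leq_trans hdiv; rewrite /Q; nia.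
have h2 : (2 * (o.+1 * j + o.+1 * o.+1 * o.+1) <= m)%N.
  rewrite -(leq_pmul2l q0); apply: leq_trans hnm; apply: leq_trans hn; nia.
have om : (o.+1 <= m)%N by nia.
have hK : (o.+1 * j + o.+1 * o.+1 * (o.+1 + n %/ Q) <= m)%N by nia.
have mb := @main_bound R w o w_ge0 w0_gt0 womega_gt0 w_gt_omega m n om j (o.+1 + n %/ Q) j0 hK.
rewrite addKn in mb.
set S := \sum_(x | _) _ in mb.
have D0 : 0 < ((n %/ Q) ^ o.+1)%:R :> R by rewrite ltr0n expn_gt0 hQ1.
have n0 : 0 < n%:R :> R by rewrite ltr0n; lia.
have Cw0 := @Cw_ge0 R w o w_ge0 w0_gt0 womega_gt0.
rewrite /bprob -/S ler_pdivrMr //.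
apply: le_trans (_ : @Cw R w o * (o.+1 * ((j + o) * n ^ o))%:R / ((n %/ Q) ^ o.+1)%:R * Zpart w m n <= _).
  by rewrite mulrAC ler_pdivlMr.
apply: ler_wpM2r; first exact: ltW.
rewrite -!mulrA; apply: ler_wpM2l => //.
rewrite ler_pdivrMr // mulrAC ler_pdivlMr // -!natrM ler_nat.
rewrite mulnA -mulnA -expnSr -[X in (_ <= X)%N]mulnA -expnMn leq_mul2l leq_exp2r //.
by rewrite hnQ orbT.
Qed.
End Key.

Lemma Zpos_m (R : realType) (w : nat -> R) (om : nat) (w_gt_omega : forall k, (om < k)%N -> w k = 0)
  m n : 0 < Zpart w m n -> (m <= om * n)%N.
Proof.
move=> Z0; rewrite leqNgt; apply/negP => hm.
suff : Zpart w m n = 0 by move=> e; rewrite e ltxx in Z0.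
rewrite /Zpart big1 // => x /eqP hx.
case: (boolP [exists i, om < x i]%N) => [/existsP [i hi]|/existsPn hall].
  by rewrite /bweight (bigD1 i) //= w_gt_omega // mul0r.
have : (\sum_(i < n) nat_of_ord (x i) <= \sum_(i < n) om)%N.
  by apply: leq_sum => i _; rewrite leqNgt hall.
rewrite hx sum_nat_const card_ord; lia.
Qed.

End BPart.
End Helpers.
Import Helpers.

Local Open Scope classical_set_scope.
Local Open Scope ring_scope.

Theorem theorem18p1 (R : realType) (w : nat -> R) (omega : nat)
  (w_ge0 : forall k, 0 <= w k) (w0_gt0 : 0 < w 0%N)
  (womega_gt0 : 0 < w omega) (w_gt_omega : forall k, (omega < k)%N -> w k = 0)
  (n m : nat -> nat) (lambda : R) (lambda_gt0 : 0 < lambda)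
  (n_to_infty : forall N : nat, \forall k \near \oo, (N <= n k)%N)
  (ratio_cvg : (fun k : nat => ((m k)%:R / (n k)%:R : R)) @ \oo --> lambda)
  (Z_pos : forall k, 0 < Zpart w (m k) (n k)) :
  forall j : nat, (0 < j)%N ->
    (fun k => @bprob R w (m k) (n k) (fun y => order_stat y j == omega)) @ \oo --> (1 : R).
Proof.
move=> j j0.
have lam2 : 0 < lambda / 2 by rewrite divr_gt0.
have lt2 : lambda / 2 < lambda by lra.
have ev : \forall t \near \oo, lambda / 2 < (m t)%:R / (n t)%:R :> R.
  exact: (cvgr_gt _ ratio_cvg _ lt2).
case: omega womega_gt0 w_gt_omega => [|o] wpos wgt.
  have hm : forall k, m k = 0%N.
    by move=> k; have := @Zpos_m R w 0%N wgt _ _ (Z_pos k); rewrite mul0n leqn0 => /eqP.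
  have [k hk] := filter_ex ev.
  by move: hk; rewrite hm mul0r => h; lra.
pose q := (Num.trunc (2 / lambda)).+1.
have hq : 2 / lambda < q%:R by apply: truncnS_gt.
have q0 : (0 < q)%N by [].
have hq1 : 1 < q%:R * (lambda / 2).
  rewrite ltr_pdivrMr // in hq; lra.
apply/cvgrPdist_le => eps eps0.
set E := (o.+1 * (j + o) * (2 * (2 * o.+1 * o.+1 * q)) ^ o.+1)%N.
have Cw0 := @Cw_ge0 R w o w_ge0 w0_gt0 wpos.
pose N1 := (Num.trunc (@Cw R w o * E%:R / eps)).+1.
have hN1 : @Cw R w o * E%:R / eps < N1%:R by apply: truncnS_gt.
pose N0 := (2 * (2 * o.+1 * o.+1 * q) + 2 * q * (o.+1 * j + o.+1 * o.+1 * o.+1))%N.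
apply: filterS2 ev (n_to_infty (maxn N0 (maxn N1 1))) => k hr hn.
rewrite !geq_max in hn; case/and3P: hn => hN0 hN1' hn1.
have nk0 : 0 < (n k)%:R :> R by rewrite ltr0n.
have hnm : (n k <= q * m k)%N.
  rewrite ltr_pdivlMr // in hr.
  have e1 : (n k)%:R < (n k)%:R * (q%:R * (lambda/2)) :> R.
    by rewrite -{1}(mulr1 (n k)%:R) ltr_pM2l.
  have e2 : (n k)%:R * (q%:R * (lambda/2)) < q%:R * (m k)%:R :> R.
    by rewrite mulrCA ltr_pM2l ?ltr0n // mulrC.
  have : (n k)%:R < (q * m k)%:R :> R by rewrite natrM; exact: lt_trans e1 e2.
  by rewrite ltr_nat => /ltnW.
rewrite (bprob_compl _ _ _ _ _ (Z_pos k)) opprB addrC subrK.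
have kb := @key_bound R w o w_ge0 w0_gt0 wpos wgt (m k) (n k) j q j0 q0 (Z_pos k) hnm hN0.
have b0 : 0 <= bprob w (fun y : config (m k) (n k) => ~~ (order_stat y j == o.+1)).
  rewrite /bprob; apply: divr_ge0; last exact: ltW.
  by apply: sumr_ge0 => x _; apply: prodr_ge0.
rewrite ger0_norm //; apply: (le_trans kb).
have h : @Cw R w o * E%:R / eps <= (n k)%:R by apply: le_trans (ltW hN1) _; rewrite ler_nat.
rewrite ler_pdivrMr // in h.
rewrite ler_pdivrMr // [eps * _]mulrC; exact: h.
Qed.
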